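(* Let $K$ be a field, $S=K[x_1,\ldots,x_n]$, $I\subset S$ a monomial ideal with $I\ne S$ and $G(I)=\{x^{a_1},\ldots,x^{a_m}\}$. Let $T$, $T_l$ be as in the context. For $l=1,\ldots,n$ and $j=1,\ldots,m$ let $L_{l,a_j(l)}$ be a monomial ideal of $T_l$ such that $L_{l,a_j(l)}\subset L_{l,a_k(l)}$ whenever $a_j(l)\ge a_k(l)$, and put $L_j=\prod_{l=1}^nL_{l,a_j(l)}\subset T$. Let $\mathbb{F}^*$ be the complex of $L_1,\ldots,L_m$ induced by $I$. Then $\mathbb{F}^*$ is acyclic (i.e. $H_i(\mathbb{F}^* )=0$ for $i>0$) and $H_0(\mathbb{F}^* )=T/L$, where $L=\sum_{j=1}^mL_j$.
   Context: For $a\in\mathbb{N}^n$, $x^a=x_1^{a(1)}\cdots x_n^{a(n)}$; $G(I)$ is the minimal monomial generating set. $T$ is the polynomial ring over $K$ in variables $x_{l1},\ldots,x_{lm_l}$ ($l=1,\ldots,n$) and $T_l=K[x_{l1},\ldots,x_{lm_l}]$. Let $0\to F_p\to\cdots\to F_1\to F_0\to S/I\to 0$ be the $\mathbb{Z}^n$-graded minimal free resolution of $S/I$ with differential $\partial$, where $F_0=S$ with basis $f_{01}$ of degree $0$, and $F_i=\bigoplus_{j=1}^{\beta_i}Sf_{ij}$ with $f_{ij}$ homogeneous of multidegree $a_{ij}\in\mathbb{N}^n$; here $\beta_1=m$, $a_{1j}=a_j$ and $\partial(f_{1j})=x^{a_j}f_{01}$. Write $\partial(f_{ij})=\sum_k\lambda^{(i)}_{kj}x^{a_{ij}-a_{i-1,k}}f_{i-1,k}$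 with $\lambda^{(i)}_{kj}\in K$, where $\lambda^{(i)}_{kj}=0$ whenever $a_{ij}-a_{i-1,k}\notin\mathbb{N}^n$; the matrices $\lambda^{(i)}=(\lambda^{(i)}_{kj})\in K^{\beta_{i-1}\times\beta_i}$ are the scalar matrices ($\lambda^{(1)}=(1,\ldots,1)$). Given monomial ideals $L_1,\ldots,L_m$ of $T$, the complex $\mathbb{F}^*$ of $L_1,\ldots,L_m$ induced by $I$ is defined by $F^*_0=T$, $F^*_i=\bigoplus_{j=1}^{\beta_i}L_{ij}$ for $1\le i\le p$, where $L_{1j}=L_j$ and, for $i\ge2$, $L_{ij}=\bigcap_{k:\lambda^{(i)}_{kj}\neq0}L_{i-1,k}$; the differential $\partial^*:F^*_i\to F^*_{i-1}$ maps a column vector $u=(u_1,\ldots,u_{\beta_i})^T$, $u_j\in L_{ij}$, to $\lambda^{(i)}u$. *)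

(* Defs.v *)
From HB Require Import structures.
From mathcomp Require Import all_boot all_order all_algebra.
From mathcomp Require Import mpoly.
Set Implicit Arguments. Unset Strict Implicit. Unset Printing Implicit Defensive.
Import GRing.Theory.
Local Open Scope ring_scope.

Definition ideal_span (R : comNzRingType) (P : R -> Prop) (f : R) : Prop :=
  exists k (c g : 'I_k -> R), (forall i, P (g i)) /\ f = \sum_(i < k) c i * g i.

Definition monomial_ideal (K : fieldType) (n : nat) (G : seq 'X_{1..n})
  : {mpoly K[n]} -> Prop :=
  ideal_span (fun g => exists2 mu, mu \in G & g = 'X_[mu]).

(* T = K[x_{lk} : l < n, k < m l], variables indexed by 'I_(sum_l m l). *)
Definition Tnum (n : nat) (m : 'I_n -> nat) : nat := (\sum_(l < n) m l)%N.

Definition Tvar (n : nat) (m : 'I_n -> nat) (l : 'I_n) (k : 'I_(m l))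
  : 'I_(Tnum m) := @tagnat.Rank n m l k.

Definition Tincl (K : fieldType) (n : nat) (m : 'I_n -> nat) (l : 'I_n)
  (p : {mpoly K[m l]}) : {mpoly K[Tnum m]} :=
  comp_mpoly [tuple 'X_(Tvar k) | k < m l] p.

(* ---- The Z^n-graded free complex over S given by the data
   beta i = rank of F_i, deg i j = a_ij, lam i k j = lambda^{(i)}_{kj}. ---- *)
(* matrix of d_{i+1} : F_{i+1} -> F_i over S *)
Definition dS (K : fieldType) (n : nat) (beta : nat -> nat)
  (deg : nat -> nat -> 'X_{1..n}) (lam : nat -> nat -> nat -> K) (i : nat)
  : 'M[{mpoly K[n]}]_(beta i, beta i.+1) :=
  \matrix_(k < beta i, j < beta i.+1)
     ((lam i.+1 k j)%:MP * 'X_[(deg i.+1 j - deg i k)%MM]).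

(* the minimal generators x^{a_1},...,x^{a_m} of I, a_j = a_{1j}, m = beta 1 *)
Definition gensI (n : nat) (beta : nat -> nat) (deg : nat -> nat -> 'X_{1..n})
  : seq 'X_{1..n} := [seq deg 1%N j | j <- iota 0 (beta 1%N)].

Definition is_min_graded_resolution (K : fieldType) (n : nat) (p : nat)
  (beta : nat -> nat) (deg : nat -> nat -> 'X_{1..n})
  (lam : nat -> nat -> nat -> K) : Prop :=
  [/\
      beta 0%N = 1%N /\ deg 0%N 0%N = 0%MM,
      (forall i, (p < i)%N -> beta i = 0%N),
      (forall j, (j < beta 1)%N -> lam 1%N 0%N j = 1),
      (* homogeneity: lambda_kj = 0 unless a_ij - a_{i-1,k} in N^n *)
      (forall i k j, (k < beta i)%N -> (j < beta i.+1)%N ->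
         lam i.+1 k j != 0 -> (deg i k <= deg i.+1 j)%MM) &
      [/\ (* minimality: nonzero entries of the differentials lie in (x_1..x_n) *)
          (forall i k j, (k < beta i)%N -> (j < beta i.+1)%N ->
             lam i.+1 k j != 0 -> deg i k != deg i.+1 j),
          (forall i (u : 'cV[{mpoly K[n]}]_(beta i.+1)),
             @dS K n beta deg lam i *m u = 0 <->
             exists w : 'cV_(beta i.+2), u = @dS K n beta deg lam i.+1 *m w),
          (* H_0 = S/I, i.e. im d_1 = I *)
          (forall f : {mpoly K[n]},
             @monomial_ideal K n (gensI beta deg) f <->
             exists w : 'cV_(beta 1%N), @dS K n beta deg lam 0 *m w = const_mx f) &
          (forall j k, (j < beta 1)%N -> (k < beta 1)%N -> j != k ->
             ~~ (deg 1%N j <= deg 1%N k)%MM)]].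

Definition Lprod (K : fieldType) (n : nat) (m : 'I_n -> nat)
  (Lgen : forall l : 'I_n, nat -> seq 'X_{1..m l}) (a : 'X_{1..n})
  : {mpoly K[Tnum m]} -> Prop :=
  ideal_span (fun g => exists u : forall l : 'I_n, {mpoly K[m l]},
     (forall l, monomial_ideal (Lgen l (a l)) (u l)) /\
     g = \prod_(l < n) Tincl (u l)).

(* membership in L_{ij}: L_{0,j} = T, L_{1j} = L_j,
   L_{i+1,j} = \bigcap_{k : lambda^{(i+1)}_{kj} != 0} L_{ik} *)
Fixpoint Lind (K : fieldType) (n : nat) (m : 'I_n -> nat)
  (Lgen : forall l : 'I_n, nat -> seq 'X_{1..m l})
  (beta : nat -> nat) (deg : nat -> nat -> 'X_{1..n})
  (lam : nat -> nat -> nat -> K) (i j : nat) (f : {mpoly K[Tnum m]}) : Prop :=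
  match i with
  | 0 => True
  | i'.+1 =>
      match i' with
      | 0 => @Lprod K n m Lgen (deg 1%N j) f
      | _ => forall k, (k < beta i')%N -> lam i k j != 0 ->
               @Lind K n m Lgen beta deg lam i' k f
      end
  end.

Definition Fstar (K : fieldType) (n : nat) (m : 'I_n -> nat)
  (Lgen : forall l : 'I_n, nat -> seq 'X_{1..m l})
  (beta : nat -> nat) (deg : nat -> nat -> 'X_{1..n})
  (lam : nat -> nat -> nat -> K) (i : nat)
  (u : 'cV[{mpoly K[Tnum m]}]_(beta i)) : Prop :=
  forall j : 'I_(beta i), @Lind K n m Lgen beta deg lam i j (u j ord0).

(* matrix of d^*_{i+1} : F^*_{i+1} -> F^*_i, the scalar matrix lambda^{(i+1)} *)
Definition dT (K : fieldType) (N : nat) (beta : nat -> nat)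
  (lam : nat -> nat -> nat -> K) (i : nat)
  : 'M[{mpoly K[N]}]_(beta i, beta i.+1) :=
  \matrix_(k < beta i, j < beta i.+1) (lam i.+1 k j)%:MP.

(* Main.v *)
Require Import Defs.
From HB Require Import structures.
From mathcomp Require Import all_boot all_order all_algebra.
From mathcomp Require Import mpoly.
From mathcomp Require Import zify.
From Stdlib Require Import ClassicalEpsilon.
Import GRing.Theory.
Local Open Scope ring_scope.
Set Implicit Arguments. Unset Strict Implicit.

Lemma mcoeffXM_gen (K : fieldType) N (d mm : 'X_{1..N}) (q : {mpoly K[N]}) :
  ('X_[d] * q)@_mm = if (d <= mm)%MM then q@_(mm - d) else 0.
Proof.
rewrite -commr_mpolyX; case: ifP => h.
  by rewrite -{1}(submK h) addmC mcoeffMX.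
apply/eqP; rewrite mcoeff_eq0; apply/negP; rewrite (perm_mem (msuppMX q d)) => /mapP [m' _ E].
by move: h; rewrite E lem_addr.
Qed.

Lemma mcoeff_sum (R : nzRingType) N (I : Type) (r : seq I) (P : pred I) (F : I -> {mpoly R[N]}) mm :
  (\sum_(i <- r | P i) F i)@_mm = \sum_(i <- r | P i) (F i)@_mm.
Proof. exact: (raddf_sum (mcoeff mm)). Qed.

Definition onS n (ob : option 'X_{1..n}) (a : 'X_{1..n}) : bool :=
  if ob is Some b then (a <= b)%MM else false.

Lemma onS_trans n ob (a a' : 'X_{1..n}) : (a <= a')%MM -> onS ob a' -> onS ob a.
Proof. by case: ob => //= b h1 h2; exact: lepm_trans h1 h2. Qed.

Section Strand.
Variables (K : fieldType) (n : nat) (beta : nat -> nat) (deg : nat -> nat -> 'X_{1..n})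
  (lam : nat -> nat -> nat -> K).
Hypothesis Hhom : forall i k j, (k < beta i)%N -> (j < beta i.+1)%N ->
         lam i.+1 k j != 0 -> (deg i k <= deg i.+1 j)%MM.
Hypothesis Hmin : forall i k j, (k < beta i)%N -> (j < beta i.+1)%N ->
             lam i.+1 k j != 0 -> deg i k != deg i.+1 j.
Hypothesis Hex : forall i (u : 'cV[{mpoly K[n]}]_(beta i.+1)),
             @dS K n beta deg lam i *m u = 0 <->
             exists w : 'cV_(beta i.+2), u = @dS K n beta deg lam i.+1 *m w.

Definition lamM i : 'M[K]_(beta i, beta i.+1) := \matrix_(k, j) lam i.+1 k j.

Definition Psi i b (U : 'cV[{mpoly K[n]}]_(beta i)) : 'cV[K]_(beta i) :=
  \col_k (if (deg i k <= b)%MM then (U k 0)@_(b - deg i k) else 0).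
Definition Phi i b (v : 'cV[K]_(beta i)) : 'cV[{mpoly K[n]}]_(beta i) :=
  \col_k ((v k 0)%:MP * 'X_[b - deg i k]).
Definition supp i ob (v : 'cV[K]_(beta i)) :=
  forall k : 'I_(beta i), ~~ onS ob (deg i k) -> v k 0 = 0.

Lemma lem_arith (a b c : 'X_{1..n}) : (a <= b)%MM -> (a <= c)%MM ->
  ((b - a <= c - a)%MM = (b <= c)%MM) /\ (c - a - (b - a) = c - b)%MM.
Proof.
move=> /mnm_lepP h1 /mnm_lepP h2; split.
  apply/mnm_lepP/mnm_lepP => h i; move: (h i) (h1 i) (h2 i); rewrite ?mnmBE; lia.
by apply/mnmP => i; rewrite !mnmBE; move: (h1 i) (h2 i); lia.
Qed.

Lemma Psi_dS i b U : Psi b (dS beta deg lam i *m U) = lamM i *m Psi b U.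
Proof.
apply/matrixP => k z; rewrite (ord1 z) !mxE.
case: ifP => hk.
  rewrite mcoeff_sum; apply: eq_bigr => j _.
  rewrite !mxE -mulrA.
  rewrite mcoeffCM mcoeffXM_gen.
  have [->|nz] := eqVneq (lam i.+1 k j) 0; first by rewrite !mul0r.
  have hkj := Hhom (ltn_ord k) (ltn_ord j) nz.
  have [-> ->] := lem_arith hkj hk; done.
rewrite big1 // => j _; rewrite !mxE.
have [->|nz] := eqVneq (lam i.+1 k j) 0; first by rewrite !mul0r.
case: ifP; rewrite ?mulr0 // => hj.
by move: hk; rewrite (lepm_trans (Hhom (ltn_ord k) (ltn_ord j) nz) hj).
Qed.

Lemma Psi_Phi i b (v : 'cV[K]_(beta i)) : supp (Some b) v -> Psi b (Phi b v) = v.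
Proof.
move=> hv; apply/matrixP => k z; rewrite (ord1 z) !mxE.
case: ifP => h; first by rewrite mcoeffCM mcoeffX eqxx mulr1.
by rewrite hv //= h.
Qed.

Lemma Psi0 i b : Psi b (0 : 'cV[{mpoly K[n]}]_(beta i)) = 0.
Proof. by apply/matrixP => k z; rewrite !mxE mcoeff0; case: ifP. Qed.

Lemma dS_Phi i b (v : 'cV[K]_(beta i.+1)) : supp (Some b) v ->
  dS beta deg lam i *m Phi b v = Phi b (lamM i *m v).
Proof.
move=> hv; apply/matrixP => k z; rewrite (ord1 z) !mxE.
rewrite (@big_morph _ _ (fun x : K => x%:MP) 0 +%R 0 +%R) ?mulr_suml; last first.
- by rewrite mpolyC0.
- by move=> x y; rewrite mpolyCD.
apply: eq_bigr => j _; rewrite !mxE.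
have [->|nz] := eqVneq (lam i.+1 k j) 0; first by rewrite !mpolyC0 !mul0r.
have [v0|vnz] := eqVneq (v j 0) 0.
  by rewrite v0 mpolyC0 mul0r mulr0 (mulr0 (lam i.+1 k j)) mpolyC0 mul0r.
have hkj := Hhom (ltn_ord k) (ltn_ord j) nz.
have hjb : (deg i.+1 j <= b)%MM by apply: contraNT vnz => h; rewrite hv.
rewrite mpolyCM -!mulrA; congr (_ * _).
rewrite mulrCA -mpolyXD; congr (_ * 'X_[_]).
by apply/mnmP => t; rewrite !mnmDE !mnmBE; move: (mnm_lepP hkj t) (mnm_lepP hjb t); lia.
Qed.

Lemma Phi0 i b : Phi b (0 : 'cV[K]_(beta i)) = 0.
Proof. by apply/matrixP => k z; rewrite !mxE mpolyC0 mul0r. Qed.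

Lemma strand_exact i ob (v : 'cV[K]_(beta i.+1)) : supp ob v -> lamM i *m v = 0 ->
  exists w, supp ob w /\ v = lamM i.+1 *m w.
Proof.
case: ob => [b|] hv hl; last first.
  exists 0; split; first by move=> k _; rewrite mxE.
  by rewrite mulmx0; apply/matrixP => k z; rewrite (ord1 z) hv ?mxE.
have /Hex [W hW] : dS beta deg lam i *m Phi b v = 0 by rewrite dS_Phi // hl Phi0.
exists (Psi b W); split.
  by move=> k hk; rewrite mxE; move: hk => /= /negbTE ->.
by rewrite -Psi_dS -hW Psi_Phi.
Qed.

Definition ej i (j : 'I_(beta i)) : 'cV[K]_(beta i) := \col_l (l == j)%:R.

Lemma dd i (j : 'I_(beta i.+2)) : lamM i *m (lamM i.+1 *m ej j) = 0.
Proof.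
have hs : supp (Some (deg i.+2 j)) (ej j).
  move=> l; rewrite mxE; case: eqP => // -> /=; by rewrite lepm_refl.
have h0 : dS beta deg lam i *m (dS beta deg lam i.+1 *m Phi (deg i.+2 j) (ej j)) = 0.
  by apply/Hex; exists (Phi (deg i.+2 j) (ej j)).
by rewrite -(Psi_Phi hs) -!Psi_dS h0 Psi0.
Qed.

Definition minb (b d : 'X_{1..n}) : 'X_{1..n} := [multinom minn (b t) (d t) | t < n].

Lemma lcm_prop i (j : 'I_(beta i.+2)) ob :
  (forall k : 'I_(beta i.+1), lam i.+2 k j != 0 -> onS ob (deg i.+1 k)) ->
  onS ob (deg i.+2 j).
Proof.
move=> H.
set dj := deg i.+2 j.
pose ob' := if ob is Some b then Some (minb b dj) else None.
have onS' a : onS ob' a = onS ob a && (a <= dj)%MM.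
  case: ob {H} @ob' => //= b; apply/mnm_lepP/andP => [h|[/mnm_lepP h1 /mnm_lepP h2] t].
    by split; apply/mnm_lepP => t; move: (h t); rewrite mnmE; lia.
  by rewrite mnmE; move: (h1 t) (h2 t); lia.
set y := lamM i.+1 *m ej j.
have hy : supp ob' y.
  move=> k; rewrite onS' => hk; rewrite !mxE (bigD1 j) //= big1 => [|l /negbTE hl]; last first.
    by rewrite !mxE hl mulr0.
  rewrite !mxE eqxx mulr1 addr0; apply/eqP; apply: contraNT hk => nz.
  by rewrite H // Hhom.
have [w [hw hyw]] := strand_exact hy (dd j).
have [//|nj] := boolP (onS ob dj); exfalso.
have wj : w j 0 = 0 by apply: hw; rewrite onS' (negbTE nj).
set v := ej j - w.
have hv0 : lamM i.+1 *m v = 0 by rewrite mulmxBr -hyw subrr.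
have hvs : supp (Some dj) v.
  move=> l hl; rewrite !mxE; case: eqP => [e|_].
    by move: hl; rewrite e /= lepm_refl.
  by rewrite sub0r hw ?oppr0 // onS' negb_and hl orbT.
have [z [hz hvz]] := strand_exact hvs hv0.
have : v j 0 = 1 by rewrite !mxE eqxx wj subr0.
rewrite hvz !mxE big1 => [/eqP|l _]; first by rewrite eq_sym oner_eq0.
rewrite !mxE.
have [->|nz] := eqVneq (lam i.+3 j l) 0; first by rewrite mul0r.
have [->|znz] := eqVneq (z l 0) 0; first by rewrite mulr0.
have h1 := Hhom (ltn_ord j) (ltn_ord l) nz.
have h2 : (deg i.+3 l <= dj)%MM by apply: contraNT znz => h; rewrite hz.
have := Hmin (ltn_ord j) (ltn_ord l) nz.
suff -> : deg i.+2 j = deg i.+3 l by rewrite eqxx.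
by apply/mnmP => t; move: (mnm_lepP h1 t) (mnm_lepP h2 t); rewrite /dj; lia.
Qed.

End Strand.

Section Span.
Variables (R : comNzRingType) (P : R -> Prop).

Lemma span0 : ideal_span P 0.
Proof. by exists 0%N, (fun _ => 0), (fun _ => 0); split => [[]//|]; rewrite big_ord0. Qed.

Lemma span_gen g : P g -> ideal_span P g.
Proof.
move=> hg; exists 1%N, (fun _ => 1), (fun _ => g); split => // .
by rewrite big_ord1 mul1r.
Qed.

Lemma spanD f g : ideal_span P f -> ideal_span P g -> ideal_span P (f + g).
Proof.
move=> [k1 [c1 [g1 [h1 ->]]]] [k2 [c2 [g2 [h2 ->]]]].
exists (k1 + k2)%N, (fun i => match split i with inl a => c1 a | inr b => c2 b end),
  (fun i => match split i with inl a => g1 a | inr b => g2 b end); split.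
  by move=> i; case: split.
rewrite big_split_ord /=; congr (_ + _); apply: eq_bigr => i _.
  by have /= -> := unsplitK (inl i : 'I_k1 + 'I_k2).
by have /= -> := unsplitK (inr i : 'I_k1 + 'I_k2).
Qed.

Lemma spanM h f : ideal_span P f -> ideal_span P (h * f).
Proof.
move=> [k [c [g [hg ->]]]]; exists k, (fun i => h * c i), g; split => //.
by rewrite mulr_sumr; apply: eq_bigr => i _; rewrite mulrA.
Qed.

Lemma span_sum (I : Type) (r : seq I) (F : I -> R) :
  (forall i, ideal_span P (F i)) -> ideal_span P (\sum_(i <- r) F i).
Proof.
move=> h; elim: r => [|a r IH]; first by rewrite big_nil; apply: span0.
by rewrite big_cons; apply: spanD.
Qed.
End Span.

Section Good.
Variables (K : fieldType) (N : nat) (Q : pred 'X_{1..N}).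
Hypothesis HQ : forall c d, Q c -> Q (d + c)%MM.

Definition good (f : {mpoly K[N]}) := forall c, c \in msupp f -> Q c.

Lemma good_mull h f : good f -> good (h * f).
Proof.
move=> hf c /msuppM_le /allpairsP [[c1 c2] /= [_ h2 ->]]; exact/HQ/hf.
Qed.

Lemma good_sum (I : Type) (r : seq I) (F : I -> {mpoly K[N]}) :
  (forall i, good (F i)) -> good (\sum_(i <- r) F i).
Proof.
move=> h; elim: r => [|a r IH]; first by rewrite big_nil => c; rewrite mcoeff_msupp mcoeff0 eqxx.
rewrite big_cons => c /msuppD_le; rewrite mem_cat => /orP [] hc; [exact: h hc|exact: IH].
Qed.

Lemma good_span (P : {mpoly K[N]} -> Prop) f :
  (forall g, P g -> good g) -> ideal_span P f -> good f.
Proof.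
move=> hP [k [c [g [hg ->]]]].
have -> : \sum_(i < k) c i * g i = \sum_(i <- enum 'I_k) c i * g i by rewrite big_enum.
by apply: good_sum => i; apply/good_mull/hP.
Qed.

End Good.

Section TS.
Variables (K : fieldType) (n : nat) (m : 'I_n -> nat).

Definition tblock l (c : 'X_{1..Tnum m}) : 'X_{1..m l} := [multinom c (Tvar k) | k < m l].
Definition tshift l (mu : 'X_{1..m l}) : 'X_{1..Tnum m} :=
  (\sum_(k < m l) U_(Tvar k) *+ mu k)%MM.


Lemma tshiftE l mu t : tshift mu t = (\sum_(k < m l) (Tvar k == t) * mu k)%N.
Proof. by rewrite mnm_sumE; apply: eq_bigr => k _; rewrite mulmnE mnm1E mulnC. Qed.

Lemma Tvar_l l l' (k : 'I_(m l)) (k' : 'I_(m l')) : Tvar k = Tvar k' -> l = l'.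
Proof. by move=> e; rewrite -(tagnat.Rank1K k) -(tagnat.Rank1K k'); congr tagnat.sig1. Qed.

Lemma Tvar_inj l : injective (@Tvar n m l).
Proof.
move=> k k' e; apply: val_inj.
have := congr1 (fun t => val (tagnat.sig2 t)) e.
by rewrite /Tvar !tagnat.Rank2K.
Qed.

Lemma tblock_tshift l (mu : 'X_{1..m l}) : tblock l (tshift mu) = mu.
Proof.
apply/mnmP => k; rewrite mnmE tshiftE (bigD1 k) //= eqxx mul1n big1 ?addn0 //.
by move=> k' hk; rewrite (inj_eq (@Tvar_inj l)) (negbTE hk).
Qed.

Lemma blockD l c d : tblock l (c + d)%MM = (tblock l c + tblock l d)%MM.
Proof. by apply/mnmP => k; rewrite mnmE (mnmDE (Tvar k) c d) mnmDE !mnmE. Qed.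

Lemma Tincl_X l (mu : 'X_{1..m l}) : Tincl ('X_[mu] : {mpoly K[m l]}) = 'X_[tshift mu].
Proof.
rewrite /Tincl comp_mpolyX /tshift -mprodXnE; apply: eq_bigr => k _.
by rewrite tnth_mktuple.
Qed.

Lemma sum_shift_block c : (\sum_(l < n) tshift (tblock l c))%MM = c.
Proof.
apply/mnmP => t; rewrite mnm_sumE.
under eq_bigr => l _ do rewrite tshiftE.
have -> : (\sum_(l < n) \sum_(k < m l) (Tvar k == t) * tblock l c k =
    (\sum_(l < n) \sum_(k < m l) (Tvar k == t)) * c t)%N.
  rewrite big_distrl; apply: eq_bigr => l _; rewrite big_distrl /=.
  by apply: eq_bigr => k _; rewrite mnmE; case: eqP => [->|]; rewrite ?mul0n.
rewrite -[RHS]mul1n; congr (_ * _)%N.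
rewrite (bigD1 (tagnat.sig1 t)) //= (bigD1 (tagnat.sig2 t)) //=.
rewrite /Tvar tagnat.sig2K eqxx big1 ?big1 //.
  move=> l hl; apply: big1 => k _; case: eqP => // e.
  by move: hl; rewrite -e tagnat.Rank1K eqxx.
move=> k hk; case: eqP => // e.
move: hk; rewrite -(@Tvar_inj _ k (tagnat.sig2 t)) ?eqxx //.
by rewrite /Tvar tagnat.sig2K.
Qed.

Lemma prod_block c : \prod_(l < n) Tincl ('X_[tblock l c] : {mpoly K[m l]}) = 'X_[c].
Proof.
under eq_bigr => l _ do rewrite Tincl_X.
by rewrite mprodXE sum_shift_block.
Qed.

End TS.

Lemma monoI_X (K : fieldType) N (G : seq 'X_{1..N}) (mu : 'X_{1..N}) :
  has (fun g => (g <= mu)%MM) G -> monomial_ideal (K:=K) G 'X_[mu].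
Proof.
case/hasP => g hg hle; rewrite -(submK hle) mpolyXD; apply: spanM; apply: span_gen.
by exists g.
Qed.

Lemma monoI_supp (K : fieldType) N (G : seq 'X_{1..N}) (f : {mpoly K[N]}) c :
  monomial_ideal G f -> c \in msupp f -> has (fun g => (g <= c)%MM) G.
Proof.
move=> hf.
pose Q := fun c => has (fun g => (g <= c)%MM) G.
have HQ : forall c d, Q c -> Q (d + c)%MM.
  move=> c' d /hasP [g hg hle]; apply/hasP; exists g => //.
  exact: lepm_trans hle (lem_addl _ _).
have Hg : forall g : {mpoly K[N]}, (fun g : {mpoly K[N]} => exists2 mu, mu \in G & g = 'X_[mu]) g -> good Q g.
  move=> g /= [mu hmu ->] c'; rewrite msuppX mem_seq1 => /eqP ->.
  by apply/hasP; exists mu => //; rewrite lepm_refl.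
exact: (good_span HQ Hg hf).
Qed.

Lemma max_mem (s : seq nat) : s != [::] -> (\max_(x <- s) x)%N \in s.
Proof.
elim: s => [//|a s IH] _; rewrite big_cons.
case: (eqVneq s [::]) => [->|ns]; first by rewrite big_nil maxn0 mem_head.
have := IH ns; case: (leqP a ((\max_(x <- s) x)%N)) => h hm.
  by rewrite in_cons hm orbT.
by rewrite mem_head.
Qed.

Section LS.
Variables (K : fieldType) (n : nat) (beta : nat -> nat) (deg : nat -> nat -> 'X_{1..n})
  (lam : nat -> nat -> nat -> K) (m : 'I_n -> nat)
  (Lgen : forall l : 'I_n, nat -> seq 'X_{1..m l}).
Hypothesis Hhom : forall i k j, (k < beta i)%N -> (j < beta i.+1)%N ->
         lam i.+1 k j != 0 -> (deg i k <= deg i.+1 j)%MM.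
Hypothesis Hmin : forall i k j, (k < beta i)%N -> (j < beta i.+1)%N ->
             lam i.+1 k j != 0 -> deg i k != deg i.+1 j.
Hypothesis Hex : forall i (u : 'cV[{mpoly K[n]}]_(beta i.+1)),
             @dS K n beta deg lam i *m u = 0 <->
             exists w : 'cV_(beta i.+2), u = @dS K n beta deg lam i.+1 *m w.
Hypothesis Hincl : forall (l : 'I_n) (j k : nat), (j < beta 1)%N -> (k < beta 1)%N ->
     (deg 1%N k l <= deg 1%N j l)%N ->
     forall f : {mpoly K[m l]},
       @monomial_ideal K (m l) (Lgen l (deg 1%N j l)) f ->
       @monomial_ideal K (m l) (Lgen l (deg 1%N k l)) f.

Local Notation LI := (@Lind K n m Lgen beta deg lam).

Definition monin l v (c : 'X_{1..Tnum m}) : bool :=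
  has (fun g => (g <= tblock l c)%MM) (Lgen l v).
Definition Dl l c : seq nat :=
  [seq deg 1%N k l | k <- iota 0 (beta 1) & monin l (deg 1%N k l) c].
Definition bT c : option 'X_{1..n} :=
  if [forall l, Dl l c != [::]] then Some [multinom (\max_(x <- Dl l c) x)%N | l < n] else None.

Lemma monin_up l v c d : monin l v c -> monin l v (d + c)%MM.
Proof.
move=> /hasP [g hg hle]; apply/hasP; exists g => //.
by rewrite blockD; exact: lepm_trans hle (lem_addl _ _).
Qed.

Lemma monin_mono l j k c : (j < beta 1)%N -> (k < beta 1)%N ->
  (deg 1%N k l <= deg 1%N j l)%N -> monin l (deg 1%N j l) c -> monin l (deg 1%N k l) c.
Proof.
move=> hj hk hle /(@monoI_X K) /(Hincl hj hk hle) h.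
by apply: (monoI_supp h); rewrite msuppX mem_seq1.
Qed.

Lemma bT_base (j : nat) c : (j < beta 1)%N ->
  onS (bT c) (deg 1%N j) = [forall l, monin l (deg 1%N j l) c].
Proof.
move=> hj.
have inD l : monin l (deg 1%N j l) c -> deg 1%N j l \in Dl l c.
  move=> h; apply/mapP; exists j => //; rewrite mem_filter h mem_iota /=; lia.
case E: [forall l, monin l (deg 1%N j l) c].
  have ne : [forall l, Dl l c != [::]].
    apply/forallP => l; have := inD l (forallP E l); by case: (Dl l c).
  rewrite /bT ne /=; apply/mnm_lepP => l; rewrite mnmE.
  by rewrite (leq_bigmax_seq (F := id) _ (inD l (forallP E l))).
rewrite /bT; case: ifP => //= ne.
apply/negP => /mnm_lepP hle; move/negP: E; apply; apply/forallP => l.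
have := hle l; rewrite mnmE.
have := max_mem (forallP ne l).
move: ((\max_(x <- Dl l c) x)%N) => M /mapP [k]; rewrite mem_filter mem_iota /= => /andP [hm hk] ->.
move=> h; apply: (monin_mono (j := k)) => //; lia.
Qed.

Lemma Lprod_supp (a : 'X_{1..n}) (f : {mpoly K[Tnum m]}) c : Lprod Lgen a f -> c \in msupp f ->
  [forall l, monin l (a l) c].
Proof.
move=> hf hc; apply/forallP => l.
have HQ : forall c d, monin l (a l) c -> monin l (a l) (d + c)%MM by move=> c' d; exact: monin_up.
apply: (good_span HQ _ hf hc).
move=> g [u [hu ->]]; rewrite (bigD1 l) //= mulrC.
apply: (good_mull (Q := monin l (a l))); first by move=> c' d; exact: monin_up.
have [k [cc [gg [hgg ->]]]] := hu l.
rewrite /Tincl rmorph_sum /=.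
apply: good_sum => i; rewrite rmorphM /= -/(Tincl _).
apply: (good_mull (Q := monin l (a l))); first by move=> c' d; exact: monin_up.
have [mu hmu ->] := hgg i; have := @Tincl_X K n m l mu; rewrite /Tincl => -> c'.
rewrite msuppX mem_seq1 => /eqP ->; apply/hasP; exists mu => //.
by rewrite tblock_tshift lepm_refl.
Qed.

Lemma Lprod_mono (a : 'X_{1..n}) c : [forall l, monin l (a l) c] ->
  Lprod Lgen a ('X_[c] : {mpoly K[Tnum m]}).
Proof.
move=> h; apply: span_gen; exists (fun l => 'X_[tblock l c]); split.
  by move=> l; apply: monoI_X; exact: (forallP h l).
by rewrite prod_block.
Qed.


Lemma Lind0 i j : LI i j 0.
Proof.
elim: i j => [|[|i] IH] j //=; first exact: span0.
by move=> k _ _; apply: IH.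
Qed.

Lemma LindD i j f g : LI i j f -> LI i j g -> LI i j (f + g).
Proof.
elim: i j f g => [|[|i] IH] j f g //=; first exact: spanD.
by move=> hf hg k hk hl; apply: IH; [exact: hf|exact: hg].
Qed.

Lemma LindM i j h f : LI i j f -> LI i j (h * f).
Proof.
elim: i j f => [|[|i] IH] j f //=; first exact: spanM.
by move=> hf k hk hl; apply: IH; exact: hf.
Qed.

Lemma Lind_supp i (j : nat) (f : {mpoly K[Tnum m]}) c : (j < beta i.+1)%N ->
  LI i.+1 j f -> c \in msupp f -> onS (bT c) (deg i.+1 j).
Proof.
elim: i j f => [|i IH] j f hj /= hf hc.
  by rewrite bT_base //; exact: Lprod_supp hf hc.
apply: (@lcm_prop K n beta deg lam Hhom Hmin Hex i (Ordinal hj) (bT c)) => k nz.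
exact: IH (ltn_ord k) (hf k (ltn_ord k) nz) hc.
Qed.

Lemma Lind_mono i (j : nat) c : (j < beta i.+1)%N ->
  onS (bT c) (deg i.+1 j) -> LI i.+1 j ('X_[c] : {mpoly K[Tnum m]}).
Proof.
elim: i j => [|i IH] j hj /= h.
  by apply: Lprod_mono; rewrite -bT_base.
move=> k hk nz; apply: (IH _ hk); apply: (onS_trans _ h); exact: (Hhom hk hj nz).
Qed.

Lemma sum_pick (r : seq 'X_{1..Tnum m}) (F : 'X_{1..Tnum m} -> K) d : uniq r ->
  \sum_(c <- r) F c * (c == d)%:R = (d \in r)%:R * F d.
Proof.
elim: r => [|a r IH] /=; first by rewrite big_nil mul0r.
case/andP => ha hu; rewrite big_cons IH // in_cons.
have [<-|ne] := eqVneq a d.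
  by rewrite (negbTE ha) /= mulr1 mul0r addr0 mul1r.
by rewrite /= mulr0 add0r.
Qed.

Lemma acyc i (u : 'cV[{mpoly K[Tnum m]}]_(beta i.+1)) :
  @Fstar K n m Lgen beta deg lam i.+1 u ->
  @dT K (Tnum m) beta lam i *m u = 0 ->
  exists w : 'cV_(beta i.+2),
    @Fstar K n m Lgen beta deg lam i.+2 w /\ u = @dT K (Tnum m) beta lam i.+1 *m w.
Proof.
move=> hu hdu.
pose C := undup (flatten [seq msupp (u j 0) | j <- enum 'I_(beta i.+1)]).
pose vc c : 'cV[K]_(beta i.+1) := \col_j (u j 0)@_c.
have hv c : lamM beta lam i *m vc c = 0.
  apply/matrixP => k z; rewrite (ord1 z) !mxE.
  have := congr1 (fun M : 'cV[{mpoly K[Tnum m]}]_(beta i) => (M k 0)@_c) hdu; rewrite /= !mxE mcoeff0 mcoeff_sum => e.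
  rewrite -[X in _ = X]e; apply: eq_bigr => j _; by rewrite !mxE mcoeffCM.
have hs c : supp deg (bT c) (vc c).
  move=> j hj; rewrite mxE; apply/eqP; rewrite mcoeff_eq0; apply: contra hj => hc.
  exact: Lind_supp (ltn_ord j) (hu j) hc.
have ex c := strand_exact Hhom Hex (hs c) (hv c).
pose wc c := proj1_sig (constructive_indefinite_description _ (ex c)).
have hw c : supp deg (bT c) (wc c) /\ vc c = lamM beta lam i.+1 *m wc c.
  exact: (proj2_sig (constructive_indefinite_description _ (ex c))).
exists (\col_l \sum_(c <- C) (wc c l 0)%:MP * 'X_[c]); split.
  move=> l; rewrite mxE; apply: (big_ind (LI i.+2 l)); [exact: Lind0|exact: LindD|].
  move=> c _; have [->|nz] := eqVneq (wc c l 0) 0.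
    by rewrite mpolyC0 mul0r; exact: Lind0.
  apply: LindM; apply: Lind_mono (ltn_ord l) _.
  by apply: contraNT nz => h; apply/eqP; exact: (hw c).1 l h.
apply/matrixP => k z; rewrite (ord1 z) !mxE; apply/mpolyP => d.
rewrite mcoeff_sum.
have -> : \sum_(l < beta i.+2) ((dT (Tnum m) beta lam i.+1) k l *
     (\col_l0 \sum_(c <- C) (wc c l0 0)%:MP * 'X_[c]) l 0)@_d =
   \sum_(l < beta i.+2) lam i.+2 k l * ((d \in C)%:R * wc d l 0).
  apply: eq_bigr => l _; rewrite !mxE mcoeffCM mcoeff_sum -(sum_pick (fun c => wc c l 0)) ?undup_uniq //.
  by congr (_ * _); apply: eq_bigr => c _; rewrite mcoeffCM mcoeffX.
case: (boolP (d \in C)) => hd.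
  have := congr1 (fun M : 'cV[K]_(beta i.+1) => M k 0) (hw d).2; rewrite !mxE => ->.
  by apply: eq_bigr => l _; rewrite !mxE mul1r.
rewrite big1 => [|l _]; last by rewrite mul0r mulr0.
apply/eqP; rewrite mcoeff_eq0; apply: contra hd => h; rewrite mem_undup.
apply/flattenP; exists (msupp (u k 0)) => //; by apply: map_f; rewrite mem_enum.
Qed.


Lemma h0part (hb0 : beta 0 = 1%N) (hl1 : forall j, (j < beta 1)%N -> lam 1%N 0%N j = 1)
  (f : {mpoly K[Tnum m]}) :
     ideal_span (fun g => exists2 j, (j < beta 1)%N & @Lprod K n m Lgen (deg 1%N j) g) f
     <-> exists u : 'cV_(beta 1%N),
           @Fstar K n m Lgen beta deg lam 1%N u /\ @dT K (Tnum m) beta lam 0 *m u = const_mx f.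
Proof.
have a0 (a : 'I_(beta 0)) : (a : nat) = 0%N by have := ltn_ord a; rewrite [X in (_ < X)%N]hb0; case: (a : nat).
split.
  move=> [k [c [g [hg ->]]]].
  have hg' i : exists j : 'I_(beta 1), Lprod Lgen (deg 1%N j) (g i).
    by case: (hg i) => j h1 h2; exists (Ordinal h1).
  pose J i := proj1_sig (constructive_indefinite_description _ (hg' i)).
  have hJ i : Lprod Lgen (deg 1%N (J i)) (g i).
    exact: (proj2_sig (constructive_indefinite_description _ (hg' i))).
  exists (\col_j \sum_(i < k | J i == j) c i * g i); split.
    move=> j; rewrite mxE; apply: (big_ind (Lprod Lgen (deg 1%N j))).
    - exact: span0.
    - exact: spanD.
    - move=> i /eqP e; rewrite -e; exact: spanM (hJ i).
  apply/matrixP => a z; rewrite (ord1 z) !mxE.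
  rewrite (partition_big J xpredT) //=; apply: eq_bigr => j _.
  by rewrite !mxE a0 hl1 // mul1r.
move=> [u [hu hd]].
have z0 : (0 < beta 0)%N by rewrite hb0.
have := congr1 (fun M : 'cV[{mpoly K[Tnum m]}]_(beta 0) => M (Ordinal z0) 0) hd.
rewrite !mxE => <-.
exists (beta 1), (fun _ => 1), (fun j => u j 0); split.
  by move=> j; exists (nat_of_ord j) => //; exact: (hu j).
by apply: eq_bigr => j _; rewrite mxE hl1 // mul1r.
Qed.

End LS.

Theorem theorem1p4 (K : fieldType) (n p : nat)
  (beta : nat -> nat) (deg : nat -> nat -> 'X_{1..n})
  (lam : nat -> nat -> nat -> K)
  (Hres : @is_min_graded_resolution K n p beta deg lam)
  (HIneS : ~ @monomial_ideal K n (gensI beta deg) (1 : {mpoly K[n]}))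
  (m : 'I_n -> nat) (Hm : forall l, (0 < m l)%N)
  (Lgen : forall l : 'I_n, nat -> seq 'X_{1..m l})
  (Hincl : forall (l : 'I_n) (j k : nat), (j < beta 1)%N -> (k < beta 1)%N ->
     (deg 1%N k l <= deg 1%N j l)%N ->
     forall f : {mpoly K[m l]},
       @monomial_ideal K (m l) (Lgen l (deg 1%N j l)) f ->
       @monomial_ideal K (m l) (Lgen l (deg 1%N k l)) f) :
  (* acyclicity: H_i(Fstar) = 0 for i > 0 *)
  (forall (i : nat) (u : 'cV[{mpoly K[Tnum m]}]_(beta i.+1)),
     @Fstar K n m Lgen beta deg lam i.+1 u -> @dT K (Tnum m) beta lam i *m u = 0 ->
     exists w : 'cV_(beta i.+2),
       @Fstar K n m Lgen beta deg lam i.+2 w /\ u = @dT K (Tnum m) beta lam i.+1 *m w) /\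
  (* H_0(Fstar) = T/L, L = sum_j L_j: the image of d^*_1 is L *)
  (forall f : {mpoly K[Tnum m]},
     ideal_span (fun g => exists2 j, (j < beta 1)%N & @Lprod K n m Lgen (deg 1%N j) g) f
     <-> exists u : 'cV_(beta 1%N),
           @Fstar K n m Lgen beta deg lam 1%N u /\ @dT K (Tnum m) beta lam 0 *m u = const_mx f).
Proof.
case: Hres => [[hb0 hd0] hp hl1 Hhom [Hmin Hex Hspan Hgen]].
split.
  move=> i u hu hdu; exact: (acyc Hhom Hmin Hex Hincl hu hdu).
by move=> f; apply: h0part.
Qed.
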